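(* Let $R_1,R_2,S_1,S_2$ be positive semidefinite $n\times n$ matrices such that $R_1R_2=R_2R_1$ and $S_1S_2=S_2S_1$. Then for every $k=1,\dots,n$, $$\prod_{i=1}^k\lambda_i\big(R_1^{1/2}R_2^{1/2}\,S_1^{1/2}S_2^{1/2}\big)\le \prod_{i=1}^k\lambda_i^{1/2}(R_1S_1)\,\lambda_i^{1/2}(S_2R_2).$$
   Context: For a matrix $X$ with real nonnegative spectrum, $\lambda_1(X)\ge\lambda_2(X)\ge\dots\ge\lambda_n(X)$ denote its eigenvalues sorted non-increasingly. *)

(* Defs.v *)
From HB Require Import structures.
From mathcomp Require Import all_boot all_order all_algebra.
From mathcomp Require Import complex.
From mathcomp Require Import reals.
From Stdlib Require Import ClassicalEpsilon.
Set Implicit Arguments. Unset Strict Implicit. Unset Printing Implicit Defensive.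
Import Order.TTheory GRing.Theory Num.Theory.
Local Open Scope ring_scope.

Definition ctrmx {C : numClosedFieldType} {m n : nat} (A : 'M[C]_(m, n)) : 'M[C]_(n, m) :=
  (map_mx Num.conj A)^T.

Definition psd {C : numClosedFieldType} {n : nat} (A : 'M[C]_n) : Prop :=
  ctrmx A = A /\ forall x : 'cV[C]_n, 0 <= (ctrmx x *m A *m x) 0 0.

(* The positive semidefinite square root A^{1/2}: the (unique) psd B with
   B * B = A; defined by choice (0 if A has no psd square root, which never
   happens for psd A). *)
Definition psd_sqrt {C : numClosedFieldType} {n : nat} (A : 'M[C]_n) : 'M[C]_n :=
  epsilon (inhabits 0) (fun B : 'M[C]_n => psd B /\ B *m B = A).

(* The eigenvalues of A, listed with algebraic multiplicity: the roots of the
   characteristic polynomial. *)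
Definition spectrum {C : numClosedFieldType} {n : nat} (A : 'M[C]_n) : seq C :=
  sval (closed_field_poly_normal (char_poly A)).

(* Eigenvalues sorted non-increasingly (meaningful when the spectrum is real);
   eig A i = lambda_{i+1}(A) (0-based index). *)
Definition eig {C : numClosedFieldType} {n : nat} (A : 'M[C]_n) (i : nat) : C :=
  nth 0 (sort (fun x y : C => y <= x) (spectrum A)) i.

(* Main.v *)
Require Import Defs.
From HB Require Import structures.
From mathcomp Require Import all_boot all_order all_algebra all_fingroup.
From mathcomp Require Import complex.
From mathcomp Require Import reals.
From mathcomp Require Import ring lra.
From Stdlib Require Import ClassicalEpsilon.
Set Implicit Arguments. Unset Strict Implicit. Unset Printing Implicit Defensive.
Import Order.TTheory GRing.Theory Num.Theory.
Local Open Scope ring_scope.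

Section Basics.
Variable C : numClosedFieldType.

Lemma ctrmxE m n (A : 'M[C]_(m, n)) : ctrmx A = (A ^t*)%sesqui.
Proof. by rewrite /ctrmx map_trmx. Qed.

Lemma ctrmxK m n (A : 'M[C]_(m, n)) : ctrmx (ctrmx A) = A.
Proof. by apply/matrixP=> i j; rewrite !mxE conjCK. Qed.

Lemma ctrmxM m n p (A : 'M[C]_(m, n)) (B : 'M[C]_(n, p)) :
  ctrmx (A *m B) = ctrmx B *m ctrmx A.
Proof. by rewrite /ctrmx map_mxM trmx_mul. Qed.

Lemma ctrmx1 n : ctrmx (1%:M : 'M[C]_n) = 1%:M.
Proof. by rewrite /ctrmx map_mx1 trmx1. Qed.

Lemma ctrmxD m n (A B : 'M[C]_(m, n)) : ctrmx (A + B) = ctrmx A + ctrmx B.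
Proof. by rewrite /ctrmx map_mxD linearD. Qed.

Lemma ctrmxN m n (A : 'M[C]_(m, n)) : ctrmx (- A) = - ctrmx A.
Proof. by rewrite /ctrmx map_mxN linearN. Qed.

Lemma ctrmx_diag n (d : 'rV[C]_n) : ctrmx (diag_mx d) = diag_mx (map_mx Num.conj d).
Proof. by apply/matrixP=> i j; rewrite !mxE; case: eqVneq => [->|]; rewrite ?conjC0 ?mulr1n ?mulr0n. Qed.

Lemma ctrmx_entry m n (A : 'M[C]_(m, n)) i j : ctrmx A i j = (A j i)^*.
Proof. by rewrite !mxE. Qed.

Lemma det_ctrmx n (A : 'M[C]_n) : \det (ctrmx A) = (\det A)^*.
Proof. by rewrite /ctrmx det_tr det_map_mx. Qed.

Lemma det_cyclic_aux (R : comNzRingType) n (A B : 'M[R]_n) (x : R) :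
  x ^+ n * \det (x%:M - A *m B) = x ^+ n * \det (x%:M - B *m A).
Proof.
pose M := block_mx (x%:M) B A (1%:M : 'M[R]_n).
have e1 : block_mx 1%:M 0 (- A) (x%:M) *m M = block_mx (x%:M) B 0 (x%:M - A *m B).
  rewrite /M mulmx_block !mul1mx !mul0mx !addr0 ?add0r.
  by rewrite mulNmx mul_scalar_mx mul_mx_scalar addNr mulmx1 addrC mulNmx.
have e2 : M *m block_mx 1%:M 0 (- A) (x%:M) = block_mx (x%:M - B *m A) (x *: B) 0 (x%:M).
  rewrite /M mulmx_block !mulmx1 !mulmx0 ?add0r ?addr0 !mul1mx mulmxN addrN mul_mx_scalar.
  by [].
have := congr1 determinant e1; have := congr1 determinant e2.
rewrite !det_mulmx !det_lblock !det_ublock !det1 !det_scalar mul1r => h2 h1.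
by rewrite -h1 mulrC h2 mulrC.
Qed.

Lemma char_poly_cyclic (F : fieldType) n (A B : 'M[F]_n) :
  char_poly (A *m B) = char_poly (B *m A).
Proof.
rewrite /char_poly /char_poly_mx !map_mxM.
have := det_cyclic_aux (map_mx polyC A) (map_mx polyC B) 'X.
apply: mulfI; by rewrite expf_neq0 // polyX_eq0.
Qed.

Lemma spectrum_cyclic n (A B : 'M[C]_n) : spectrum (A *m B) = spectrum (B *m A).
Proof. by rewrite /spectrum char_poly_cyclic. Qed.

Lemma eig_cyclic n (A B : 'M[C]_n) : eig (A *m B) = eig (B *m A).
Proof. by rewrite /eig spectrum_cyclic. Qed.


Lemma conj_diag_entry m n (P : 'M[C]_(m, n)) (d : 'rV[C]_m) x y :
  (ctrmx P *m diag_mx d *m P) x y = \sum_i (P i x)^* * d 0 i * P i y.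
Proof. by rewrite !mxE; apply: eq_bigr => i _; rewrite mul_mx_diag !mxE. Qed.

Lemma unit_entry m n (P : 'M[C]_(m, n)) x y :
  (P *m ctrmx P) x y = \sum_i P x i * (P y i)^*.
Proof. by rewrite !mxE; apply: eq_bigr => i _; rewrite !mxE. Qed.

Lemma herm_spectral0 n (A : 'M[C]_n) : ctrmx A = A ->
  exists P : 'M[C]_n, exists d : 'rV[C]_n,
   [/\ P *m ctrmx P = 1%:M, A = ctrmx P *m diag_mx d *m P & forall i, d 0 i \is Num.real].
Proof.
move=> hA.
have hh : A \is hermsymmx.
  by apply/is_hermitianmxP; rewrite expr0 scale1r -ctrmxE hA.
have /orthomx_spectralP eA := hermitian_normalmx hh.
have U := spectral_unitarymx A.
exists (spectralmx A), (spectral_diag A); split.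
- by rewrite ctrmxE; apply/unitarymxP.
- by rewrite {1}eA invmx_unitary // ctrmxE.
- move=> i; have := hermitian_spectral_diag_real hh.
  by move/mxOverP => /(_ 0 i).
Qed.

Lemma char_poly_conj n (P : 'M[C]_n) (D : 'M[C]_n) : P *m ctrmx P = 1%:M ->
  char_poly (ctrmx P *m D *m P) = char_poly D.
Proof.
move=> hP; rewrite -mulmxA char_poly_cyclic -mulmxA.
by rewrite hP mulmx1.
Qed.

Lemma spectrum_diag n (d : 'rV[C]_n) :
  perm_eq (spectrum (diag_mx d)) [seq d 0 i | i <- enum 'I_n].
Proof.
apply: prod_XsubC_eq.
have := svalP (closed_field_poly_normal (char_poly (diag_mx d))).
rewrite -/(spectrum _) (monicP (char_poly_monic _)) scale1r => <-.
rewrite char_poly_trig ?diag_mx_is_trig // big_map big_enum /=.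
by apply: eq_bigr => i _; rewrite mxE eqxx mulr1n.
Qed.

Definition rdesc (x y : C) := y <= x.

Lemma herm_spectral n (A : 'M[C]_n) : ctrmx A = A ->
  exists P : 'M[C]_n, exists d : 'rV[C]_n,
   [/\ P *m ctrmx P = 1%:M, A = ctrmx P *m diag_mx d *m P,
       forall i, d 0 i \is Num.real,
       forall i j : 'I_n, (i <= j)%N -> d 0 j <= d 0 i &
       forall i : 'I_n, eig A i = d 0 i].
Proof.
move=> /herm_spectral0 [P0 [d0 [hP0 eA hr]]].
pose t := [tuple d0 0 i | i < n].
pose s := sort rdesc t.
have st : perm_eq s t by rewrite perm_sort.
have [p sp] := tuple_permP st.
pose d : 'rV[C]_n := \row_i d0 0 (p i).
have ds : forall i : 'I_n, nth 0 s i = d 0 i.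
  by move=> i; rewrite sp nth_mktuple tnth_mktuple mxE.
have treal : all (fun x => x \is Num.real) t.
  by apply/allP => x /mapP [i _ ->]; exact: hr.
have tot : {in Num.real &, total rdesc}.
  by move=> x y hx hy; rewrite /rdesc orbC real_leVge.
have ssorted : sorted rdesc s by exact: sort_sorted_in tot _ treal.
pose P := row_perm p P0.
have hP : P *m ctrmx P = 1%:M.
  apply/matrixP => i j; rewrite unit_entry.
  have h := congr1 (fun M : 'M[C]_n => M (p i) (p j)) hP0.
  rewrite /= unit_entry in h.
  rewrite (eq_bigr (fun k => P0 (p i) k * (P0 (p j) k)^* )); last by move=> k _; rewrite !mxE.
  by rewrite h !mxE (inj_eq perm_inj).
have eA' : A = ctrmx P *m diag_mx d *m P.
  apply/matrixP => x y; rewrite eA !conj_diag_entry.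
  rewrite (reindex_inj (@perm_inj _ p)) /=.
  by apply: eq_bigr => i _; rewrite !mxE.
have dreal : forall i, d 0 i \is Num.real by move=> i; rewrite mxE.
exists P, d; split => //.
- move=> i j hij.
  rewrite -!ds.
  have trd : transitive rdesc by move=> x y z h1 h2; exact: le_trans h2 h1.
  have := @sorted_leq_nth _ rdesc trd (fun x => lexx x) 0 s ssorted.
  by apply; rewrite ?inE ?size_sort ?size_tuple.
- move=> i; rewrite /eig -ds.
  have e1 : perm_eq (spectrum A) t.
    rewrite /spectrum eA char_poly_conj // -/(spectrum _).
    apply: perm_trans (spectrum_diag d0) _.
    by [].
  suff -> : sort (fun x y : C => y <= x) (spectrum A) = s by [].
  apply/perm_sort_inP => //.
  + move=> x y hx hy; apply: tot; rewrite ?(perm_mem e1) //;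
      by [apply: (allP treal); rewrite -(perm_mem e1)].
  + by move=> x y z _ _ _ h1 h2; rewrite /= (le_trans h2 h1).
  + by move=> x y _ _ /andP [h1 h2]; apply/le_anti/andP.
Qed.

Lemma quad_diag n (z : 'rV[C]_n) (d : 'rV[C]_n) :
  (z *m diag_mx d *m ctrmx z) 0 0 = \sum_j d 0 j * (z 0 j * (z 0 j)^*).
Proof.
rewrite mul_mx_diag !mxE; apply: eq_bigr => j _; rewrite !mxE.
by rewrite mulrAC mulrC.
Qed.

Lemma quad_conj m n (y : 'rV[C]_n) (P : 'M[C]_(m, n)) (H : 'M[C]_m) :
  y *m (ctrmx P *m H *m P) *m ctrmx y = (y *m ctrmx P) *m H *m ctrmx (y *m ctrmx P).
Proof. by rewrite ctrmxM ctrmxK !mulmxA. Qed.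

Lemma psd_herm n (A : 'M[C]_n) : psd A -> ctrmx A = A.
Proof. by case. Qed.

Lemma psd_row n (A : 'M[C]_n) : psd A -> forall y : 'rV[C]_n, 0 <= (y *m A *m ctrmx y) 0 0.
Proof. by case=> _ h y; have := h (ctrmx y); rewrite ctrmxK. Qed.

Lemma psdP n (A : 'M[C]_n) : ctrmx A = A -> (forall y : 'rV[C]_n, 0 <= (y *m A *m ctrmx y) 0 0) -> psd A.
Proof. by move=> h1 h2; split => // x; have := h2 (ctrmx x); rewrite ctrmxK. Qed.

Lemma row_unit n (P : 'M[C]_n) (i : 'I_n) : P *m ctrmx P = 1%:M ->
  row i P *m ctrmx P = delta_mx 0 i.
Proof. by move=> h; rewrite -row_mul h row1. Qed.

Lemma psd_spectral n (A : 'M[C]_n) : psd A ->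
  exists P : 'M[C]_n, exists d : 'rV[C]_n,
   [/\ P *m ctrmx P = 1%:M, A = ctrmx P *m diag_mx d *m P,
       forall i, 0 <= d 0 i,
       forall i j : 'I_n, (i <= j)%N -> d 0 j <= d 0 i &
       forall i : 'I_n, eig A i = d 0 i].
Proof.
move=> hA; have [P [d [hP eA _ hs he]]] := herm_spectral (psd_herm hA).
exists P, d; split => // i.
have := psd_row hA (row i P); rewrite eA quad_conj row_unit // quad_diag.
rewrite (bigD1 i) //= big1 ?addr0; first by rewrite !mxE !eqxx /= !mulr1n conjC1 !mulr1 => h; exact: h.
by move=> j hj; rewrite !mxE (negPf hj) /= mul0r mulr0.
Qed.

Lemma psd_sqrt_exists n (A : 'M[C]_n) : psd A -> exists B, psd B /\ B *m B = A.
Proof.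
move=> hA; have [P [d [hP eA hd _ _]]] := psd_spectral hA.
pose s : 'rV[C]_n := \row_j sqrtC (d 0 j).
have hPP : ctrmx P *m P = 1%:M by exact: (mulmx1C hP).
exists (ctrmx P *m diag_mx s *m P); split.
  apply: psdP.
    rewrite !ctrmxM ctrmxK ctrmx_diag mulmxA; congr (_ *m _ *m _).
    by apply/matrixP => i j; rewrite !mxE geC0_conj // sqrtC_ge0.
  move=> y; rewrite quad_conj quad_diag; apply: sumr_ge0 => j _.
  by rewrite mulr_ge0 ?mul_conjC_ge0 // mxE sqrtC_ge0.
rewrite eA -!mulmxA; congr (_ *m _); rewrite !mulmxA -[_ *m P *m ctrmx P]mulmxA hP mulmx1.
rewrite mulmx_diag; congr (diag_mx _ *m _).
by apply/matrixP => i j; rewrite !mxE ord1 -expr2 sqrtCK.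
Qed.

Lemma psd_sqrtP n (A : 'M[C]_n) : psd A ->
  psd (psd_sqrt A) /\ psd_sqrt A *m psd_sqrt A = A.
Proof.
move=> hA; rewrite /psd_sqrt; apply: (epsilon_spec (inhabits 0) (fun B : 'M[C]_n => psd B /\ B *m B = A)).
exact: psd_sqrt_exists.
Qed.

Lemma diag_commute_sq n (X : 'M[C]_n) (d : 'rV[C]_n) : (forall i, 0 <= d 0 i) ->
  X *m (diag_mx d *m diag_mx d) = (diag_mx d *m diag_mx d) *m X ->
  X *m diag_mx d = diag_mx d *m X.
Proof.
move=> hd h; apply/matrixP => i j; move/matrixP: h => /(_ i j).
rewrite mulmx_diag !mul_mx_diag !mul_diag_mx !mxE => e.
have [->|nz] := eqVneq (X i j) 0; first by rewrite mul0r mulr0.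
have e2 : d 0 j ^+ 2 = d 0 i ^+ 2.
  by apply: (mulfI nz); rewrite !expr2 e mulrC.
by move: e2 => /eqP; rewrite eqrXn2 // => /eqP ->; rewrite mulrC.
Qed.

Lemma psd_commute_sqrt n (a B : 'M[C]_n) : psd a ->
  B *m (a *m a) = (a *m a) *m B -> B *m a = a *m B.
Proof.
move=> ha; have [P [d [hP ea hd _ _]]] := psd_spectral ha.
have hPP : ctrmx P *m P = 1%:M by exact: (mulmx1C hP).
pose X := P *m B *m ctrmx P.
have aa : a *m a = ctrmx P *m (diag_mx d *m diag_mx d) *m P.
  rewrite ea -!mulmxA; congr (_ *m _); rewrite !mulmxA.
  by rewrite -[_ *m P *m ctrmx P]mulmxA hP mulmx1.
have eB : B = ctrmx P *m X *m P.
  by rewrite /X !mulmxA hPP mul1mx -mulmxA hPP mulmx1.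
move=> hB.
have hX : X *m (diag_mx d *m diag_mx d) = (diag_mx d *m diag_mx d) *m X.
  have h1 : ctrmx P *m (diag_mx d *m diag_mx d) = (a *m a) *m ctrmx P.
    by rewrite aa -mulmxA hP mulmx1.
  have h2 : (diag_mx d *m diag_mx d) *m P = P *m (a *m a).
    by rewrite aa !mulmxA hP mul1mx.
  rewrite /X -mulmxA h1 !mulmxA -[P *m B *m a *m a]mulmxA -[P *m B *m (a *m a)]mulmxA hB.
  by rewrite !mulmxA -[P *m a *m a]mulmxA -h2 ?mulmxA.
have := diag_commute_sq hd hX => hc.
clearbody X.
rewrite eB ea !mulmxA -[_ *m P *m ctrmx P]mulmxA hP mulmx1.
rewrite -[ctrmx P *m X *m diag_mx d]mulmxA hc !mulmxA.
by rewrite -[_ *m P *m ctrmx P]mulmxA hP mulmx1.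
Qed.

Lemma psd_congr m n (H : 'M[C]_n) (A : 'M[C]_(m, n)) : psd H -> psd (A *m H *m ctrmx A).
Proof.
move=> hH; apply: psdP.
  by rewrite !ctrmxM ctrmxK (psd_herm hH) mulmxA.
move=> y; have := psd_row hH (y *m A).
by rewrite ctrmxM !mulmxA.
Qed.

Lemma norm_sum m n (y : 'M[C]_(m, n)) i : (y *m ctrmx y) i i = \sum_k y i k * (y i k)^*.
Proof. by rewrite !mxE; apply: eq_bigr => k _; rewrite !mxE. Qed.

Lemma psd1 n : psd (1%:M : 'M[C]_n).
Proof.
apply: psdP; first exact: ctrmx1.
by move=> y; rewrite mulmx1 norm_sum; apply: sumr_ge0 => k _; exact: mul_conjC_ge0.
Qed.

Lemma psd_gram m n (A : 'M[C]_(m, n)) : psd (A *m ctrmx A).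
Proof. by have := psd_congr A (psd1 n); rewrite mulmx1. Qed.

Lemma norm_ge0 m (y : 'rV[C]_m) : 0 <= (y *m ctrmx y) 0 0.
Proof. by rewrite norm_sum; apply: sumr_ge0 => k _; exact: mul_conjC_ge0. Qed.

Lemma norm_gt0 m (y : 'rV[C]_m) : y != 0 -> 0 < (y *m ctrmx y) 0 0.
Proof.
move=> hy; have [i hi] : exists i, y 0 i != 0.
  apply/existsP; apply: contraR hy; rewrite negb_exists => /forallP h.
  by apply/eqP/matrixP => a b; rewrite ord1 mxE; apply/eqP; have := h b; rewrite negbK.
rewrite norm_sum (bigD1 i) //=; apply: (lt_le_trans (y := y 0 i * (y 0 i)^* )).
  by rewrite mul_conjC_gt0.
by rewrite lerDl; apply: sumr_ge0 => k _; exact: mul_conjC_ge0.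
Qed.

Lemma psd_mul_comm n (c d : 'M[C]_n) : psd c -> psd d -> c *m d = d *m c -> psd (c *m d).
Proof.
move=> hc hd hcd; have [hc' ec'] := psd_sqrtP hc.
set c' := psd_sqrt c in hc' ec'.
have hdc' : d *m c' = c' *m d by apply: psd_commute_sqrt => //; rewrite ec'.
apply: psdP; first by rewrite ctrmxM (psd_herm hc) (psd_herm hd).
move=> y; have := psd_row hd (y *m c').
rewrite ctrmxM (psd_herm hc') -ec' !mulmxA -[y *m c' *m c' *m d]mulmxA.
by rewrite -[y *m c' *m (c' *m d)]mulmxA -hdc' !mulmxA.
Qed.

Lemma pid_row_entry m r (c : 'rV[C]_m) i :
  (c *m pid_mx r) 0 i = if (i < r)%N then c 0 i else 0.
Proof.
rewrite !mxE (bigD1 i) //= big1 ?addr0.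
  by rewrite !mxE eqxx /=; case: ifP => _; rewrite ?mulr1 ?mulr0.
by move=> k hk; rewrite !mxE; rewrite (_ : (k == i :> nat) = false) ?mulr0 //; exact/negbTE.
Qed.

Lemma copid_row_entry m r (c : 'rV[C]_m) i :
  (c *m copid_mx r) 0 i = if (r <= i)%N then c 0 i else 0.
Proof.
rewrite /copid_mx mulmxBr mulmx1; have := pid_row_entry r c i; move: (c *m pid_mx r) => M e; rewrite !mxE e.
by rewrite [(r <= i)%N]leqNgt; case: (i < r)%N; rewrite /= ?subrr ?subr0.
Qed.

Lemma quad_unit m (Q : 'M[C]_m) (d : 'rV[C]_m) (z : 'rV[C]_m) : Q *m ctrmx Q = 1%:M ->
  (z *m Q) *m (ctrmx Q *m diag_mx d *m Q) *m ctrmx (z *m Q) = z *m diag_mx d *m ctrmx z.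
Proof. by move=> hQ; rewrite quad_conj -[z *m Q *m ctrmx Q]mulmxA hQ mulmx1. Qed.

Lemma norm_unit m (Q : 'M[C]_m) (z : 'rV[C]_m) : Q *m ctrmx Q = 1%:M ->
  (z *m Q) *m ctrmx (z *m Q) = z *m ctrmx z.
Proof. by move=> hQ; rewrite ctrmxM mulmxA -[z *m Q *m ctrmx Q]mulmxA hQ mulmx1. Qed.

Lemma top_form m (Q : 'M[C]_m) (g : 'rV[C]_m) (j : 'I_m) (y : 'rV[C]_m) :
  Q *m ctrmx Q = 1%:M -> (forall i k : 'I_m, (i <= k)%N -> g 0 k <= g 0 i) ->
  (y <= (pid_mx j.+1 : 'M_m) *m Q)%MS ->
  g 0 j * (y *m ctrmx y) 0 0 <= (y *m (ctrmx Q *m diag_mx g *m Q) *m ctrmx y) 0 0.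
Proof.
move=> hQ hs /submxP [c ->]; rewrite ![c *m (_ *m Q)]mulmxA quad_unit // norm_unit //.
rewrite quad_diag norm_sum mulr_sumr; apply: ler_sum => i _.
rewrite pid_row_entry; case: ifP => hi.
  by apply: ler_wpM2r; [exact: mul_conjC_ge0 | apply: hs; rewrite -ltnS].
by rewrite mul0r !mulr0.
Qed.

Lemma bot_form n (P : 'M[C]_n) (h : 'rV[C]_n) (j : 'I_n) (w : 'rV[C]_n) :
  P *m ctrmx P = 1%:M -> (forall i k : 'I_n, (i <= k)%N -> h 0 k <= h 0 i) ->
  (w <= (copid_mx j : 'M_n) *m P)%MS ->
  (w *m (ctrmx P *m diag_mx h *m P) *m ctrmx w) 0 0 <= h 0 j * (w *m ctrmx w) 0 0.
Proof.
move=> hP hs /submxP [c ->]; rewrite ![c *m (_ *m P)]mulmxA quad_unit // norm_unit //.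
rewrite quad_diag norm_sum mulr_sumr; apply: ler_sum => i _.
rewrite copid_row_entry; case: ifP => hi.
  by apply: ler_wpM2r; [exact: mul_conjC_ge0 | apply: hs].
by rewrite mul0r !mulr0.
Qed.

Lemma interlace n m (H : 'M[C]_n) (A : 'M[C]_(m, n)) (j : nat) :
  psd H ->
  (forall y : 'rV[C]_m, (y *m A *m ctrmx (y *m A)) 0 0 <= (y *m ctrmx y) 0 0) ->
  (j < m)%N -> (j < n)%N ->
  eig (A *m H *m ctrmx A) j <= eig H j.
Proof.
move=> hH hA jm jn.
have hG := psd_congr A hH.
have [P [h [hP eH h0 hs he]]] := psd_spectral hH.
have [Q [g [hQ eG g0 gs ge]]] := psd_spectral hG.
rewrite (he (Ordinal jn)) (ge (Ordinal jm)).
set jn' := Ordinal jn; set jm' := Ordinal jm.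
set G := A *m H *m ctrmx A in eG ge hG *.
pose Yt : 'M_m := (pid_mx j.+1 : 'M_m) *m Q.
pose Eb : 'M_n := (copid_mx j : 'M_n) *m P.
have Qu : row_free Q by rewrite row_free_unit; case: (mulmx1_unit hQ).
have Pu : row_free P by rewrite row_free_unit; case: (mulmx1_unit hP).
have rY : \rank Yt = j.+1 by rewrite /Yt mxrankMfree // rank_pid_mx.
have rE : \rank Eb = (n - j)%N by rewrite /Eb mxrankMfree // rank_copid_mx // ltnW.
have F1 : forall y : 'rV_m, (y <= Yt)%MS ->
    g 0 jm' * (y *m ctrmx y) 0 0 <= (y *m G *m ctrmx y) 0 0.
  by move=> y hy; rewrite eG; apply: top_form.
have F2 : forall w : 'rV_n, (w <= Eb)%MS ->
    (w *m H *m ctrmx w) 0 0 <= h 0 jn' * (w *m ctrmx w) 0 0.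
  by move=> w hw; rewrite eH; apply: bot_form.
have yGy : forall y : 'rV_m, y *m G *m ctrmx y = (y *m A) *m H *m ctrmx (y *m A).
  by move=> y; rewrite /G ctrmxM !mulmxA.
have [lt|ge'] := ltnP (\rank (Yt *m A)) j.+1.
  have hk := mxrank_mul_ker Yt A.
  have : (Yt :&: kermx A)%MS != 0.
    rewrite -mxrank_eq0; apply/eqP => e; move: hk; rewrite e addn0 rY => e2.
    by move: lt; rewrite e2 ltnn.
  case/rowV0Pn => y hy ny.
  have y1 : (y <= Yt)%MS by exact: submx_trans hy (capmxSl _ _).
  have y2 : y *m A = 0 by apply/sub_kermxP; exact: submx_trans hy (capmxSr _ _).
  have := F1 y y1; rewrite yGy y2 !mul0mx [X in _ <= X]mxE => hle.
  have hy0 := norm_gt0 ny.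
  apply: (@le_trans _ _ 0); last exact: h0.
  by rewrite -(ler_pM2r hy0) mul0r; exact: hle.
have rYA : \rank (Yt *m A) = j.+1.
  by apply/eqP; rewrite eqn_leq ge' andbT -rY mxrankM_maxl.
have hs2 := mxrank_sum_cap (Yt *m A) Eb.
have : ((Yt *m A) :&: Eb)%MS != 0.
  rewrite -mxrank_eq0; apply/eqP => e; move: hs2; rewrite e addn0 rYA rE => e2.
  have hle := rank_leq_col (Yt *m A + Eb)%MS.
  have e3 : (j.+1 + (n - j))%N = n.+1 by rewrite addSn subnKC // ltnW.
  by move: hle; rewrite e2 e3 ltnn.
case/rowV0Pn => w hw nw.
have w1 : (w <= Yt *m A)%MS by exact: submx_trans hw (capmxSl _ _).
have w2 : (w <= Eb)%MS by exact: submx_trans hw (capmxSr _ _).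
case/submxP: w1 => c ew.
set y := c *m Yt.
have yw : w = y *m A by rewrite ew mulmxA.
have y1 : (y <= Yt)%MS by exact: submxMl.
have ny : y != 0 by apply: contraNneq nw => e; rewrite yw e mul0mx.
have hy0 := norm_gt0 ny.
rewrite -(ler_pM2r hy0).
apply: le_trans (F1 y y1) _.
rewrite yGy -yw.
apply: le_trans (F2 w w2) _.
apply: ler_wpM2l; first exact: h0.
by rewrite yw; exact: hA.

Qed.


Lemma eig_ge0 n (G : 'M[C]_n) (i : 'I_n) : psd G -> 0 <= eig G i.
Proof. by move=> hG; have [P [d [_ _ h0 _ he]]] := psd_spectral hG; rewrite he. Qed.

Lemma eig_ge0n n (G : 'M[C]_n) (i : nat) : psd G -> (i < n)%N -> 0 <= eig G i.
Proof. by move=> hG hi; exact: (eig_ge0 (Ordinal hi) hG). Qed.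

Lemma eig_det n (G : 'M[C]_n) : psd G -> \det G = \prod_(i < n) eig G i.
Proof.
move=> hG; have [P [d [hP eG _ _ he]]] := psd_spectral hG.
have hPP : ctrmx P *m P = 1%:M by exact: (mulmx1C hP).
rewrite {1}eG !det_mulmx det_diag mulrAC -det_mulmx hPP det1 mul1r.
by apply: eq_bigr => i _; rewrite he.
Qed.

Lemma det_compress k n (H : 'M[C]_n) (A : 'M[C]_(k, n)) : psd H ->
  (forall y : 'rV[C]_k, (y *m A *m ctrmx (y *m A)) 0 0 <= (y *m ctrmx y) 0 0) ->
  (k <= n)%N ->
  \det (A *m H *m ctrmx A) <= \prod_(i < k) eig H i.
Proof.
move=> hH hA kn; have hG := psd_congr A hH.
rewrite eig_det //; apply: ler_prod => i _; rewrite eig_ge0 //=.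
by apply: interlace => //; exact: leq_trans (ltn_ord i) kn.
Qed.

Lemma contr_unit k n (W : 'M[C]_(k, n)) : W *m ctrmx W = 1%:M ->
  forall y : 'rV[C]_k, (y *m W *m ctrmx (y *m W)) 0 0 <= (y *m ctrmx y) 0 0.
Proof. by move=> hW y; rewrite ctrmxM mulmxA -[y *m W *m ctrmx W]mulmxA hW mulmx1. Qed.

Lemma contr_proj k n (U : 'M[C]_(k, n)) : U *m ctrmx U = 1%:M ->
  forall y : 'rV[C]_n, (y *m (ctrmx U *m U) *m ctrmx (y *m (ctrmx U *m U))) 0 0 <= (y *m ctrmx y) 0 0.
Proof.
move=> hU y.
set Pi := ctrmx U *m U.
have hPi : ctrmx Pi = Pi by rewrite /Pi ctrmxM ctrmxK.
have hPP : Pi *m Pi = Pi by rewrite /Pi mulmxA -[ctrmx U *m U *m ctrmx U]mulmxA hU mulmx1.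
have e1 : y *m Pi *m ctrmx (y *m Pi) = y *m Pi *m ctrmx y.
  by rewrite ctrmxM hPi mulmxA -[y *m Pi *m Pi]mulmxA hPP.
set z := y - y *m Pi.
have e2 : z *m ctrmx z = y *m ctrmx y - y *m Pi *m ctrmx y.
  rewrite /z ctrmxD ctrmxN ctrmxM hPi mulmxDr !mulmxBl mulmxN.
  by rewrite mulmxN opprK (mulmxA (y *m Pi) Pi) -(mulmxA y Pi Pi) hPP (mulmxA y Pi) addNr addr0.
rewrite e1 -subr_ge0.
have := norm_ge0 z; rewrite e2.
have hsub : forall M N : 'M[C]_1, (M - N) 0 0 = M 0 0 - N 0 0 by move=> M N; rewrite !mxE.
by rewrite hsub.
Qed.

Lemma proj_bound k n (U : 'M[C]_(k, n)) (X : 'M[C]_n) : U *m ctrmx U = 1%:M -> (k <= n)%N ->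
  \prod_(i < k) eig (X *m ctrmx U *m U *m ctrmx X) i <= \prod_(i < k) eig (X *m ctrmx X) i.
Proof.
move=> hU kn.
set Pi := ctrmx U *m U.
have hPi : ctrmx Pi = Pi by rewrite /Pi ctrmxM ctrmxK.
have hPP : Pi *m Pi = Pi by rewrite /Pi mulmxA -[ctrmx U *m U *m ctrmx U]mulmxA hU mulmx1.
have hX : psd (ctrmx X *m X) by have := psd_gram (ctrmx X); rewrite ctrmxK.
have hG : psd (X *m Pi *m ctrmx X).
  by have := psd_gram (X *m ctrmx U); rewrite ctrmxM ctrmxK !mulmxA.
apply: ler_prod => i _; rewrite eig_ge0n //=; last exact: leq_trans (ltn_ord i) kn.
have -> : X *m ctrmx U *m U *m ctrmx X = (X *m Pi) *m (Pi *m ctrmx X).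
  by rewrite /Pi !mulmxA -[X *m ctrmx U *m U *m ctrmx U]mulmxA hU mulmx1.
rewrite eig_cyclic.
have -> : Pi *m ctrmx X *m (X *m Pi) = Pi *m (ctrmx X *m X) *m ctrmx Pi by rewrite hPi !mulmxA.
rewrite [eig (X *m ctrmx X)]eig_cyclic.
apply: interlace => //; last exact: leq_trans (ltn_ord i) kn.
  exact: contr_proj hU.
  exact: leq_trans (ltn_ord i) kn.
by rewrite -(mulmxA X (ctrmx U) U); exact: hG.
Qed.

Lemma core k n (Hh : 'M[C]_(k, n)) (X Y : 'M[C]_n) (D : 'M[C]_k) :
  (k <= n)%N -> row_free Hh -> Hh *m X *m Y = D *m Hh ->
  \det D * (\det D)^* <=
    (\prod_(i < k) eig (X *m ctrmx X) i) * (\prod_(i < k) eig (ctrmx Y *m Y) i).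
Proof.
move=> kn hf e.
set W := schmidt Hh.
have hW : W *m ctrmx W = 1%:M by rewrite ctrmxE; apply/unitarymxP; exact: schmidt_unitarymx.
have h1 := mulmxKpV (schmidt_sub Hh); rewrite -/W in h1.
have eH : Hh = (Hh *m ctrmx W) *m W.
  have hZ : Hh *m ctrmx W = Hh *m pinvmx W by rewrite -{1}h1 -[_ *m W *m ctrmx W]mulmxA hW mulmx1.
  by rewrite hZ h1.
set T := Hh *m ctrmx W in eH; clearbody T.
have Tu : T \in unitmx.
  rewrite -row_free_unit -row_leq_rank; have := mxrankM_maxl T W.
  by rewrite -eH (eqP hf).
have e2 : W *m X *m Y *m ctrmx W = invmx T *m D *m T.
  have := congr1 (fun M => invmx T *m M *m ctrmx W) e; rewrite /= eH.
  rewrite !mulmxA mulVmx // mul1mx => ->.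
  by rewrite -!mulmxA hW mulmx1.
have hdet : \det D = \det (W *m X *m Y *m ctrmx W).
  by rewrite e2 !det_mulmx det_inv mulrAC mulVr ?mul1r // -unitmxE.
set U := schmidt (W *m ctrmx Y).
have hU : U *m ctrmx U = 1%:M by rewrite ctrmxE; apply/unitarymxP; exact: schmidt_unitarymx.
have eU : W *m ctrmx Y *m ctrmx U *m U = W *m ctrmx Y.
  have h2 := mulmxKpV (schmidt_sub (W *m ctrmx Y)); rewrite -/U in h2.
  by rewrite -{1}h2 -[_ *m U *m ctrmx U]mulmxA hU mulmx1 h2.
have eYW : ctrmx U *m U *m Y *m ctrmx W = Y *m ctrmx W.
  by have := congr1 ctrmx eU; rewrite !ctrmxM !ctrmxK !mulmxA.
have hsplit : W *m X *m Y *m ctrmx W = (W *m X *m ctrmx U) *m (U *m Y *m ctrmx W).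
  by rewrite -(mulmxA (W *m X)) -eYW !mulmxA.
set Aa := W *m X *m ctrmx U in hsplit *.
set Bb := U *m Y *m ctrmx W in hsplit *.
have hA : \det Aa * (\det Aa)^* <= \prod_(i < k) eig (X *m ctrmx X) i.
  rewrite -det_ctrmx -det_mulmx.
  have -> : Aa *m ctrmx Aa = W *m (X *m ctrmx U *m U *m ctrmx X) *m ctrmx W.
    by rewrite /Aa !ctrmxM !ctrmxK !mulmxA.
  apply: le_trans (proj_bound X hU kn).
  apply: det_compress => //; last exact: contr_unit.
  by have := psd_gram (X *m ctrmx U); rewrite ctrmxM ctrmxK !mulmxA.
have hB : \det Bb * (\det Bb)^* <= \prod_(i < k) eig (ctrmx Y *m Y) i.
  rewrite mulrC -det_ctrmx -det_mulmx.
  have -> : ctrmx Bb *m Bb = W *m (ctrmx Y *m Y) *m ctrmx W.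
    rewrite /Bb !ctrmxM !ctrmxK !mulmxA -[W *m ctrmx Y *m ctrmx U *m U]mulmxA.
    by rewrite mulmxA eU.
  apply: det_compress => //; last exact: contr_unit.
  by have := psd_gram (ctrmx Y); rewrite ctrmxK.
rewrite hdet hsplit det_mulmx rmorphM mulrACA.
by apply: ler_pM => //; exact: mul_conjC_ge0.
Qed.

Lemma sqrt_commute n (R1 R2 : 'M[C]_n) : psd R1 -> psd R2 -> R1 *m R2 = R2 *m R1 ->
  psd_sqrt R1 *m psd_sqrt R2 = psd_sqrt R2 *m psd_sqrt R1.
Proof.
move=> h1 h2 e; have [ha aa] := psd_sqrtP h1; have [hb bb] := psd_sqrtP h2.
have s1 : R2 *m psd_sqrt R1 = psd_sqrt R1 *m R2.
  by apply: psd_commute_sqrt => //; rewrite aa.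
by apply: psd_commute_sqrt => //; rewrite bb.
Qed.

Lemma bound_final k (L : C) (e1 e2 : 'I_k -> C) :
  L \is Num.real -> (forall i, 0 <= e1 i) -> (forall i, 0 <= e2 i) ->
  L * L^* <= (\prod_i e1 i) * (\prod_i e2 i) ->
  L <= \prod_i (sqrtC (e1 i) * sqrtC (e2 i)).
Proof.
move=> hL h1 h2 hle.
have hR : 0 <= \prod_i (sqrtC (e1 i) * sqrtC (e2 i)).
  by apply: prodr_ge0 => i _; rewrite mulr_ge0 // sqrtC_ge0.
have [hL0|hL0] := boolP (L <= 0); first exact: le_trans hL0 hR.
have hL1 : 0 <= L.
  by case/orP: (real_leVge hL (real0 _)) => // h; rewrite h in hL0.
rewrite -(ler_sqr hL1 hR) -prodrXl.
have -> : \prod_i (sqrtC (e1 i) * sqrtC (e2 i)) ^+ 2 = (\prod_i e1 i) * (\prod_i e2 i).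
  by rewrite -big_split /=; apply: eq_bigr => i _; rewrite exprMn !sqrtCK.
by rewrite expr2 -{2}(conj_Creal hL).
Qed.

Theorem main_gen (n : nat) (R1 R2 S1 S2 : 'M[C]_n) :
  psd R1 -> psd R2 -> psd S1 -> psd S2 ->
  R1 *m R2 = R2 *m R1 -> S1 *m S2 = S2 *m S1 ->
  forall k : nat, (1 <= k <= n)%N ->
    \prod_(i < k)
       eig (psd_sqrt R1 *m psd_sqrt R2 *m psd_sqrt S1 *m psd_sqrt S2) i
    <= \prod_(i < k) (sqrtC (eig (R1 *m S1) i) * sqrtC (eig (S2 *m R2) i)).
Proof.
move=> hR1 hR2 hS1 hS2 eR eS k /andP [k1 kn].
have [ha aa] := psd_sqrtP hR1; have [hb bb] := psd_sqrtP hR2.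
have [hc cc] := psd_sqrtP hS1; have [hd dd] := psd_sqrtP hS2.
have ab := sqrt_commute hR1 hR2 eR.
have cd := sqrt_commute hS1 hS2 eS.
set a := psd_sqrt R1 in ha aa ab *; set b := psd_sqrt R2 in hb bb ab *.
set c := psd_sqrt S1 in hc cc cd *; set d := psd_sqrt S2 in hd dd cd *.
have hQ : psd (c *m d) by apply: psd_mul_comm.
have [hq qq] := psd_sqrtP hQ; set q := psd_sqrt (c *m d) in hq qq.
set G := q *m (a *m b) *m q.
have hG : ctrmx G = G.
  by rewrite /G !ctrmxM (psd_herm ha) (psd_herm hb) (psd_herm hq) -ab !mulmxA.
have eM : eig (a *m b *m c *m d) = eig G.
  by rewrite -mulmxA -qq mulmxA eig_cyclic /G !mulmxA.
rewrite eM.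
have e1n : forall i : 'I_k, 0 <= eig (R1 *m S1) i.
  move=> i; rewrite -cc mulmxA eig_cyclic mulmxA.
  apply: eig_ge0n; last exact: leq_trans (ltn_ord i) kn.
  by have := psd_congr c hR1; rewrite (psd_herm hc).
have e2n : forall i : 'I_k, 0 <= eig (S2 *m R2) i.
  move=> i; rewrite -bb mulmxA eig_cyclic mulmxA.
  apply: eig_ge0n; last exact: leq_trans (ltn_ord i) kn.
  by have := psd_congr b hS2; rewrite (psd_herm hb).
have [P0 [g [hP0 eG greal gs ge]]] := herm_spectral hG.
set L := \prod_(i < k) eig G i.
have Lreal : L \is Num.real.
  apply: rpred_prod => i _.
  by rewrite (ge (widen_ord kn i)).
apply: bound_final => //.
have [L0|Lnz] := eqVneq L 0.
  by rewrite L0 mul0r; apply: mulr_ge0; apply: prodr_ge0 => i _.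
pose w := widen_ord kn.
have winj : injective w by move=> x y /(congr1 val) /= /val_inj.
pose W : 'M[C]_(k, n) := \matrix_(i, j) P0 (w i) j.
pose D : 'M[C]_k := diag_mx (\row_i g 0 (w i)).
have hW : W *m ctrmx W = 1%:M.
  apply/matrixP => i j; rewrite unit_entry.
  have h := congr1 (fun M : 'M[C]_n => M (w i) (w j)) hP0.
  rewrite /= unit_entry in h.
  rewrite (eq_bigr (fun x => P0 (w i) x * (P0 (w j) x)^* )); last by move=> x _; rewrite !mxE.
  by rewrite h !mxE (inj_eq winj).
have WG : W *m G = D *m W.
  have hP0G : P0 *m G = diag_mx g *m P0.
    by rewrite {1}eG !mulmxA hP0 mul1mx.
  apply/matrixP => i j.
  have h := congr1 (fun M : 'M[C]_n => M (w i) j) hP0G.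
  rewrite /= in h.
  rewrite mul_diag_mx !mxE; rewrite mul_diag_mx !mxE in h.
  by rewrite -h; apply: eq_bigr => x _; rewrite !mxE.
have LD : L = \det D.
  by rewrite det_diag; apply: eq_bigr => i _; rewrite mxE -(ge (w i)).
have Du : D \in unitmx by rewrite unitmxE -LD unitfE.
have key : W *m q *m (a *m b *m (c *m d)) = D *m (W *m q).
  by rewrite -qq !mulmxA -WG /G !mulmxA.
set H := W *m q in key.
set Hb := H *m b.
have eq1 : Hb *m (a *m c) *m (d *m b) = D *m Hb.
  have := congr1 (mulmx^~ b) key; rewrite /= ab /Hb !mulmxA => <-.
  by [].
have rk_inv : forall (M : 'M[C]_(k, n)), (\rank M <= \rank (D *m M))%N.
  move=> M; rewrite -{1}[M](mulKmx Du); exact: mxrankM_maxr.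
have rW : \rank W = k.
  apply/eqP; apply/row_freeP; exists (ctrmx W); exact: hW.
have r1 : (k <= \rank H)%N.
  rewrite -{1}rW; apply: leq_trans (rk_inv W) _.
  rewrite -WG /G /H !mulmxA.
  have -> : W *m q *m a *m b *m q = (W *m q) *m (a *m b *m q) by rewrite !mulmxA.
  exact: mxrankM_maxl.
have r2 : (k <= \rank Hb)%N.
  apply: leq_trans r1 _; apply: leq_trans (rk_inv H) _.
  have -> : D *m H = Hb *m (a *m c *m d).
    by rewrite -key /Hb /H ab !mulmxA.
  exact: mxrankM_maxl.
have hf : row_free Hb by rewrite /row_free eqn_leq rank_leq_row r2.
have := core kn hf eq1.
rewrite -LD.
have -> : eig (a *m c *m ctrmx (a *m c)) = eig (R1 *m S1).
  rewrite ctrmxM (psd_herm ha) (psd_herm hc) -mulmxA eig_cyclic.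
  by rewrite !mulmxA -[c *m c *m a *m a]mulmxA aa cc eig_cyclic.
have -> : eig (ctrmx (d *m b) *m (d *m b)) = eig (S2 *m R2).
  rewrite ctrmxM (psd_herm hb) (psd_herm hd) -mulmxA eig_cyclic.
  by rewrite !mulmxA -[d *m d *m b *m b]mulmxA bb dd.
by [].
Qed.



End Basics.

Theorem proposition2 (R : realType) (n : nat) (R1 R2 S1 S2 : 'M[R[i]]_n) :
  psd R1 -> psd R2 -> psd S1 -> psd S2 ->
  R1 *m R2 = R2 *m R1 -> S1 *m S2 = S2 *m S1 ->
  forall k : nat, (1 <= k <= n)%N ->
    \prod_(i < k)
       eig (psd_sqrt R1 *m psd_sqrt R2 *m psd_sqrt S1 *m psd_sqrt S2) i
    <= \prod_(i < k) (sqrtC (eig (R1 *m S1) i) * sqrtC (eig (S2 *m R2) i)).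
Proof. exact: main_gen. Qed.
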